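(* Let $k<n$ be coprime positive integers, $b=k/n$, and let $F\in\mathfrak{F}$ (with this $b$ and $n$). Then $F$ has an attracting periodic orbit of period $n$ all of whose points lie in the first lap $(-\infty,y_-)$ or the third lap $(y_+,\infty)$ of $F$. Moreover, both critical points $y_-$ and $y_+$ of $F$ lie in the immediate basin of attraction of this periodic orbit.
   Context: Fix coprime positive integers $k<n$ and set $b=k/n\in(0,1)$. Let $g\colon\mathbb{R}\to(0,1)$ be a $C^3$ map and $F\colon\mathbb{R}\to\mathbb{R}$, $F(x)=x+b-g(x)$. The class $\mathfrak{F}$ consists of all such $F$ for which the Schwarzian derivative $SF=\frac{F'''}{F'}-\frac32\left(\frac{F''}{F'}\right)^2$ is negative (wherever defined) and the following hold: (A) there exist $y_-,y_+$ with $b-1<y_-<0<y_+<b$ such that $0<g'(x)<1$ on $(-\infty,y_-)\cup(y_+,\infty)$, $g'(y_-)=g'(y_+)=1$, and $g'(x)>1$ on $(y_-,y_+)$; (B) $g(b-1)<b<g(b)$; (C) there exists $\varepsilon>0$ such that (C1) $g(x)<\varepsilon$ for all $x<-\frac1{2n}$; (C2) $g(x)>1-\varepsilon$ for all $x>\frac1{2n}$; (C3) $(n-1)\varepsilon<1-g(y_+)$ and $(n-1)\varepsilon<\frac1{2n}-\big(1-g(y_+)+y_+\big)$; (C4) $(n-1)\varepsilon<g(y_-)$ and $(n-1)\varepsilon<\frac1{2n}-\big(g(y_-)-y_-\big)$. Thus $F$ is increasing on $(-\infty,y_-]$ (the first lap) and on $[y_+,\infty)$ (the third lap), decreasing on $[y_-,y_+]$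 (the second lap), and $y_\pm$ are its critical points. The immediate basin of attraction of an attracting periodic orbit is the union of the connected components of its basin of attraction that contain points of the orbit. *)

(* Defs.v *)
From Stdlib Require Import Reals.
From Coquelicot Require Import Coquelicot.
Open Scope R_scope.

Definition iterF (F : R -> R) (m : nat) (x : R) : R := Nat.iter m F x.

Definition C3 (g : R -> R) : Prop :=
  (forall x, ex_derive_n g 1 x /\ ex_derive_n g 2 x /\ ex_derive_n g 3 x) /\
  (forall x, continuous (Derive_n g 3) x).

Definition schwarzian (F : R -> R) (x : R) : R :=
  Derive_n F 3 x / Derive_n F 1 x
  - 3 / 2 * (Derive_n F 2 x / Derive_n F 1 x) ^ 2.

Definition Fmap (b : R) (g : R -> R) (x : R) : R := x + b - g x.

Definition in_class_F (n : nat) (b : R) (g : R -> R) (ym yp eps : R) : Prop :=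
  let F := Fmap b g in
  C3 g /\
  (forall x, 0 < g x < 1) /\
  (forall x, Derive F x <> 0 -> schwarzian F x < 0) /\
  (b - 1 < ym /\ ym < 0 /\ 0 < yp /\ yp < b) /\
  (forall x, (x < ym \/ yp < x) -> 0 < Derive g x < 1) /\
  Derive g ym = 1 /\ Derive g yp = 1 /\
  (forall x, ym < x < yp -> Derive g x > 1) /\
  (g (b - 1) < b /\ b < g b) /\
  0 < eps /\
  (forall x, x < - (1 / (2 * INR n)) -> g x < eps) /\
  (forall x, x > 1 / (2 * INR n) -> g x > 1 - eps) /\
  ((INR n - 1) * eps < 1 - g yp /\
   (INR n - 1) * eps < 1 / (2 * INR n) - (1 - g yp + yp)) /\
  ((INR n - 1) * eps < g ym /\
   (INR n - 1) * eps < 1 / (2 * INR n) - (g ym - ym)).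

Definition periodic_of_period (F : R -> R) (n : nat) (p : R) : Prop :=
  (0 < n)%nat /\ iterF F n p = p /\
  (forall j : nat, (0 < j < n)%nat -> iterF F j p <> p).

Definition attracting (F : R -> R) (n : nat) (p : R) : Prop :=
  ex_derive (iterF F n) p /\ Rabs (Derive (iterF F n) p) < 1.

Definition basin (F : R -> R) (n : nat) (p : R) (x : R) : Prop :=
  exists j : nat, (j < n)%nat /\
    is_lim_seq (fun m : nat => iterF F (m * n) x) (iterF F j p).

(* immediate basin: union of the connected components of the basin that
   contain orbit points.  In R, x lies in the connected component of the
   basin containing q iff the closed segment between x and q lies in the
   basin. *)
Definition immediate_basin (F : R -> R) (n : nat) (p : R) (x : R) : Prop :=
  exists j : nat, (j < n)%nat /\
    forall z, Rmin x (iterF F j p) <= z <= Rmax x (iterF F j p) ->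
      basin F n p z.

(* Main.v *)
Require Import Defs.
From Stdlib Require Import Reals Arith.
From Coquelicot Require Import Coquelicot.
From Stdlib Require Import Lra Lia ZArith Znumtheory.
Open Scope R_scope.
Open Scope Z_scope.

Definition stepr (K NN r : Z) : Z := if Z.ltb r 0 then r + K else r + K - NN.
Definition steps (K NN s : Z) : Z := if Z.leb s 0 then s + K else s + K - NN.
Fixpoint rI (K NN : Z) (j : nat) : Z :=
  match j with O => 0 | S j' => stepr K NN (rI K NN j') end.
Fixpoint sI (K NN : Z) (j : nat) : Z :=
  match j with O => 0 | S j' => steps K NN (sI K NN j') end.

Section Idx.
Variables K NN : Z.
Hypothesis HK : 0 < K.
Hypothesis HKN : K < NN.

Lemma rI_prop j : K - NN <= rI K NN j <= K - 1 /\
  exists t, rI K NN j = Z.of_nat j * K - NN * t.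
Proof.
  induction j as [|j [IH [t Ht]]]; cbn [rI sI]; try rewrite Nat2Z.inj_succ.
  - split; [lia| exists 0; lia].
  - unfold stepr. destruct (Z.ltb_spec (rI K NN j) 0).
    + split; [lia| exists t; lia].
    + split; [lia| exists (t+1); lia].
Qed.

Lemma sI_prop j : K - NN + 1 <= sI K NN j <= K /\
  exists t, sI K NN j = Z.of_nat j * K - NN * t.
Proof.
  induction j as [|j [IH [t Ht]]]; cbn [rI sI]; try rewrite Nat2Z.inj_succ.
  - split; [lia| exists 0; lia].
  - unfold steps. destruct (Z.leb_spec (sI K NN j) 0).
    + split; [lia| exists t; lia].
    + split; [lia| exists (t+1); lia].
Qed.

Lemma steps_stepr r : steps K NN (r + 1) = stepr K NN r + 1.
Proof.
  unfold steps, stepr. destruct (Z.ltb_spec r 0); destruct (Z.leb_spec (r+1) 0); lia.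
Qed.

Lemma zero_div j (Hg : Z.gcd NN K = 1) :
  (exists t, Z.of_nat j * K - NN * t = 0) -> (NN | Z.of_nat j).
Proof.
  intros [t Ht]. apply Z.gauss with K; auto.
  exists t. lia.
Qed.

Lemma rI_zero j (Hg : Z.gcd NN K = 1) : rI K NN j = 0 -> (NN | Z.of_nat j).
Proof.
  intros H. apply zero_div; auto. destruct (rI_prop j) as [_ [t Ht]].
  exists t; lia.
Qed.

Lemma sI_zero j (Hg : Z.gcd NN K = 1) : sI K NN j = 0 -> (NN | Z.of_nat j).
Proof.
  intros H. apply zero_div; auto. destruct (sI_prop j) as [_ [t Ht]].
  exists t; lia.
Qed.

Lemma rI_NN (n : nat) : NN = Z.of_nat n -> rI K NN n = 0.
Proof.
  intros E. destruct (rI_prop n) as [R [t Ht]]. rewrite <- E in Ht.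
  assert (Ht' : rI K NN n = NN * (K - t)) by lia.
  destruct (Z.lt_trichotomy (K - t) 0) as [h|[h|h]]; nia.
Qed.

Lemma sI_NN (n : nat) : NN = Z.of_nat n -> sI K NN n = 0.
Proof.
  intros E. destruct (sI_prop n) as [R [t Ht]]. rewrite <- E in Ht.
  assert (Ht' : sI K NN n = NN * (K - t)) by lia.
  destruct (Z.lt_trichotomy (K - t) 0) as [h|[h|h]]; nia.
Qed.

Lemma sI_one (n : nat) (Hg : Z.gcd NN K = 1) : NN = Z.of_nat n ->
  exists l, (1 <= l <= n)%nat /\ sI K NN l = 1.
Proof.
  intros E.
  assert (Hr : rel_prime K NN).
  { apply Zgcd_1_rel_prime. rewrite Z.gcd_comm; auto. }
  destruct (rel_prime_bezout _ _ Hr) as [u v Huv].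
  set (l := Z.to_nat (u mod NN)).
  assert (Hm : 0 <= u mod NN < NN) by (apply Z.mod_pos_bound; lia).
  assert (Hl : Z.of_nat l = u mod NN) by (unfold l; rewrite Z2Nat.id; lia).
  assert (Hd : u = NN * (u / NN) + u mod NN) by (apply Z.div_mod; lia).
  exists l. destruct (sI_prop l) as [R [t Ht]].
  assert (l <> 0%nat).
  { intro h. rewrite h in Hl. simpl in Hl. rewrite <- Hl in Hd. set (q := u / NN) in *. clearbody q.
    assert (E1 : 1 = NN * (q * K + v)) by (rewrite <- Huv, Hd; ring).
    destruct (Z.lt_trichotomy (q * K + v) 0) as [h1|[h1|h1]]; nia. }
  split; [lia|].
  rewrite Hl in Ht.
  (* sI l = (u mod NN)*K - NN t, and u*K = 1 - v NN *)
  assert (Hx : sI K NN l = 1 - NN * (v + (u/NN)*K + t)) by nia.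
  destruct (Z.lt_trichotomy (v + (u/NN)*K + t) 0) as [h|[h|h]]; nia.
Qed.
End Idx.

Definition wn (n j : nat) : nat := if Nat.ltb j n then S j else 1%nat.

Lemma iter_wn_add n i j : (1 <= j)%nat -> (j + i <= n)%nat -> Nat.iter i (wn n) j = (j + i)%nat.
Proof.
  induction i; intros; simpl. lia.
  rewrite IHi by lia. unfold wn. destruct (Nat.ltb_spec (j+i) n); lia.
Qed.

Lemma iter_wn_n n j : (1 <= j <= n)%nat -> Nat.iter n (wn n) j = j.
Proof.
  intros H.
  transitivity (Nat.iter ((j - 1) + (1 + (n - j))) (wn n) j).
  { f_equal. lia. }
  rewrite !Nat.iter_add. rewrite (iter_wn_add n (n-j) j) by lia.
  replace (j + (n - j))%nat with n by lia. idtac.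
  change (Nat.iter 1 (wn n) n) with (wn n n). unfold wn at 2. rewrite Nat.ltb_irrefl. rewrite iter_wn_add by lia. lia.
Qed.

Lemma wn_range n j : (1 <= n)%nat -> (1 <= j <= n)%nat -> (1 <= wn n j <= n)%nat.
Proof. unfold wn; intros; destruct (Nat.ltb_spec j n); lia. Qed.

Lemma iter_wn_range n i j : (1 <= n)%nat -> (1 <= j <= n)%nat -> (1 <= Nat.iter i (wn n) j <= n)%nat.
Proof. induction i; simpl; intros; auto. apply wn_range; auto. Qed.
Close Scope Z_scope.
Open Scope R_scope.

Lemma cv_le_const (u : nat -> R) l q : Un_cv u l -> (forall m, u m <= q) -> l <= q.
Proof.
  intros Hc Hu. destruct (Rle_or_lt l q) as [h|h]; auto.
  destruct (Hc (l - q)) as [N HN]; [lra|].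
  specialize (HN N (le_n _)). specialize (Hu N). unfold R_dist in HN.
  apply Rabs_def2 in HN. lra.
Qed.

Lemma cv_ge_const (u : nat -> R) l q : Un_cv u l -> (forall m, q <= u m) -> q <= l.
Proof.
  intros Hc Hu. destruct (Rle_or_lt q l) as [h|h]; auto.
  destruct (Hc (q - l)) as [N HN]; [lra|].
  specialize (HN N (le_n _)). specialize (Hu N). unfold R_dist in HN.
  apply Rabs_def2 in HN. lra.
Qed.

Lemma cv_shift (u : nat -> R) l : Un_cv u l -> Un_cv (fun m => u (S m)) l.
Proof.
  intros H e He. destruct (H e He) as [N HN]. exists N. intros m Hm. apply HN. lia.
Qed.

Lemma conv_interval (G : R -> R) (a c q : R) :
  (forall x, continuity_pt G x) -> a <= q <= c -> G q = q ->
  (forall x, a <= x <= c -> a <= G x <= c) ->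
  (forall x y, a <= x <= y -> y <= c -> G x <= G y) ->
  (forall x y, a <= x -> x < y -> y <= c -> G y - y < G x - x) ->
  forall z, a <= z <= c -> Un_cv (fun m => Nat.iter m G z) q.
Proof.
  intros Hcont Hq Gq Hmap Hmon Hphi z Hz.
  assert (Huniq : forall l, a <= l <= c -> G l = l -> l = q).
  { intros l Hl Gl. destruct (Rtotal_order l q) as [h|[h|h]]; auto.
    - specialize (Hphi l q ltac:(lra) h ltac:(lra)). lra.
    - specialize (Hphi q l ltac:(lra) h ltac:(lra)). lra. }
  set (u := fun m => Nat.iter m G z).
  assert (Hfix : forall l, Un_cv u l -> G l = l).
  { intros l Hl. apply UL_sequence with (fun m => u (S m)).
    - apply (continuity_seq G u l (Hcont l) Hl).
    - apply cv_shift; auto. }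
  destruct (Rle_or_lt z q) as [hz|hz].
  - assert (Hb : forall m, z <= u m <= q).
    { induction m; simpl; [lra|].
      change (u (S m)) with (G (u m)).
      destruct (Req_dec (u m) q) as [e|e].
      + rewrite e, Gq. lra.
      + assert (h1 := Hphi (u m) q ltac:(lra) ltac:(lra) ltac:(lra)).
        assert (h2 := Hmon (u m) q ltac:(lra) ltac:(lra)). lra. }
    assert (Hg : Un_growing u).
    { intro m. change (u (S m)) with (G (u m)). specialize (Hb m).
      destruct (Req_dec (u m) q) as [e|e].
      + rewrite e, Gq. lra.
      + assert (h1 := Hphi (u m) q ltac:(lra) ltac:(lra) ltac:(lra)). lra. }
    destruct (growing_cv u Hg) as [l Hl].
    { exists q. intros x [m ->]. apply Hb. }
    assert (l <= q) by (apply (cv_le_const u); auto; apply Hb).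
    assert (z <= l) by (apply (cv_ge_const u); auto; apply Hb).
    assert (l = q) by (apply Huniq; [lra| apply Hfix; auto]).
    subst l. exact Hl.
  - assert (Hb : forall m, q <= u m <= z).
    { induction m; simpl; [lra|].
      change (u (S m)) with (G (u m)).
      destruct (Req_dec (u m) q) as [e|e].
      + rewrite e, Gq. lra.
      + assert (h1 := Hphi q (u m) ltac:(lra) ltac:(lra) ltac:(lra)).
        assert (h2 := Hmon q (u m) ltac:(lra) ltac:(lra)). lra. }
    assert (Hg : Un_decreasing u).
    { intro m. change (u (S m)) with (G (u m)). specialize (Hb m).
      destruct (Req_dec (u m) q) as [e|e].
      + rewrite e, Gq. lra.
      + assert (h1 := Hphi q (u m) ltac:(lra) ltac:(lra) ltac:(lra)). lra. }
    destruct (decreasing_cv u Hg) as [l Hl].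
    { exists (-q). intros x [m ->]. unfold opp_seq. specialize (Hb m). lra. }
    assert (q <= l) by (apply (cv_ge_const u); auto; apply Hb).
    assert (l <= z) by (apply (cv_le_const u); auto; apply Hb).
    assert (l = q) by (apply Huniq; [lra| apply Hfix; auto]).
    subst l. exact Hl.
Qed.

Section Main.
Variables (k n : nat) (g : R -> R) (ym yp eps : R).
Hypothesis Hk : (0 < k)%nat.
Hypothesis Hkn : (k < n)%nat.
Hypothesis Hgcd : Nat.gcd k n = 1%nat.
Hypothesis HC : in_class_F n (INR k / INR n) g ym yp eps.

Local Notation F := (Fmap (INR k / INR n) g).

Lemma g_der x : ex_derive g x.
Proof. destruct HC as [[H _] _]. exact (proj1 (H x)). Qed.

Lemma F_der x : is_derive F x (1 - Derive g x).
Proof.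
  unfold Fmap. auto_derive. apply g_der. change (Derive (fun x0 : R => g x0) x) with (Derive g x). lra.
Qed.

Lemma Hdg x : (x < ym \/ yp < x) -> 0 < Derive g x < 1.
Proof. destruct HC as (_&_&_&_&H&_). apply H. Qed.

Lemma Hym_yp : ym < yp.
Proof. destruct HC as (_&_&_&H&_). lra. Qed.

Lemma F_mono_L x y : x < y -> y <= ym -> F x < F y.
Proof.
  intros h1 h2.
  destruct (MVT_cor2 F (fun t => 1 - Derive g t) x y h1) as [c [Hc1 Hc2]].
  { intros c _. apply is_derive_Reals, F_der. }
  assert (0 < Derive g c < 1) by (apply Hdg; lra). nra.
Qed.

Lemma F_mono_R x y : x < y -> yp <= x -> F x < F y.
Proof.
  intros h1 h2.
  destruct (MVT_cor2 F (fun t => 1 - Derive g t) x y h1) as [c [Hc1 Hc2]].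
  { intros c _. apply is_derive_Reals, F_der. }
  assert (0 < Derive g c < 1) by (apply Hdg; lra). nra.
Qed.

Lemma F_le_L x y : x <= y -> y <= ym -> F x <= F y.
Proof. intros h1 h2. destruct (Req_dec x y). subst; lra. left; apply F_mono_L; lra. Qed.
Lemma F_le_R x y : x <= y -> yp <= x -> F x <= F y.
Proof. intros h1 h2. destruct (Req_dec x y). subst; lra. left; apply F_mono_R; lra. Qed.


Local Notation u := (/ INR n).
Local Notation KK := (Z.of_nat k).
Local Notation NN := (Z.of_nat n).
Local Notation rr := (rI KK NN).
Local Notation ss := (sI KK NN).

Lemma Hn0 : 0 < INR n.
Proof. apply lt_0_INR. lia. Qed.
Lemma Hu : 0 < u.
Proof. apply Rinv_0_lt_compat, Hn0. Qed.
Lemma Hhalf : 1 / (2 * INR n) = u / 2.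
Proof. field. apply Rgt_not_eq, Hn0. Qed.

Lemma Hg01 x : 0 < g x < 1.
Proof. destruct HC as (_&H&_). apply H. Qed.
Lemma HC1 x : x < - (u/2) -> g x < eps.
Proof. rewrite <- Hhalf. destruct HC as (_&_&_&_&_&_&_&_&_&_&H&_). apply H. Qed.
Lemma HC2 x : x > u/2 -> g x > 1 - eps.
Proof. rewrite <- Hhalf. destruct HC as (_&_&_&_&_&_&_&_&_&_&_&H&_). apply H. Qed.
Lemma HC3 : (INR n - 1)*eps < 1 - g yp /\ (INR n - 1) * eps < u/2 - (1 - g yp + yp).
Proof. rewrite <- Hhalf. destruct HC as (_&_&_&_&_&_&_&_&_&_&_&_&H&_). apply H. Qed.
Lemma HC4 : (INR n - 1)*eps < g ym /\ (INR n - 1) * eps < u/2 - (g ym - ym).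
Proof. rewrite <- Hhalf. destruct HC as (_&_&_&_&_&_&_&_&_&_&_&_&_&H). apply H. Qed.
Lemma Heps : 0 < eps.
Proof. destruct HC as (_&_&_&_&_&_&_&_&_&H&_). apply H. Qed.
Lemma Hsg : ym < 0 /\ 0 < yp.
Proof. destruct HC as (_&_&_&H&_). lra. Qed.
Lemma Hn1 : 1 <= INR n - 1.
Proof. assert (2 <= INR n). { replace 2 with (INR 2) by (simpl; lra). apply le_INR. lia. } lra. Qed.

Lemma step_off r o : r <> 0%Z -> - (u/2) < o < u/2 ->
  exists o', F (IZR r * u + o) = IZR (stepr KK NN r) * u + o' /\ o - eps < o' < o + eps.
Proof.
  intros Hr Ho. pose proof Hu. pose proof Hn0. unfold stepr.
  destruct (Z.ltb_spec r 0) as [h|h].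
  - assert (IZR r <= -1) by (apply IZR_le; lia).
    assert (hx : IZR r * u + o < - (u/2)) by nra.
    pose proof (HC1 _ hx). pose proof (Hg01 (IZR r * u + o)).
    exists (o - g (IZR r * u + o)). split; [|lra].
    unfold Fmap. rewrite plus_IZR, <- INR_IZR_INZ. unfold Rdiv. ring.
  - assert (IZR r >= 1) by (apply Rle_ge, IZR_le; lia).
    assert (hx : IZR r * u + o > u/2) by nra.
    pose proof (HC2 _ hx). pose proof (Hg01 (IZR r * u + o)).
    exists (o + 1 - g (IZR r * u + o)). split; [|lra].
    unfold Fmap. rewrite minus_IZR, plus_IZR, <- !INR_IZR_INZ. field. lra.
Qed.

Lemma steps_eq s : s <> 0%Z -> steps KK NN s = stepr KK NN s.
Proof. intros. unfold steps, stepr. destruct (Z.leb_spec s 0); destruct (Z.ltb_spec s 0); lia. Qed.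


Lemma HK0 : (0 < KK)%Z. Proof. lia. Qed.
Lemma HKN : (KK < NN)%Z. Proof. lia. Qed.
Lemma Zgcd1 : Z.gcd NN KK = 1%Z.
Proof.
  apply Z.divide_1_r_nonneg; [apply Z.gcd_nonneg|].
  pose proof (Z.gcd_divide_l NN KK) as d1. pose proof (Z.gcd_divide_r NN KK) as d2.
  destruct (Nat.gcd_bezout k n) as [[a [c H]]|[a [c H]]]; rewrite Hgcd in H.
  - assert (E : (1 = Z.of_nat a * KK - Z.of_nat c * NN)%Z) by lia.
    rewrite E. apply Z.divide_sub_r; rewrite Z.mul_comm; apply Z.divide_mul_l; auto.
  - assert (E : (1 = Z.of_nat a * NN - Z.of_nat c * KK)%Z) by lia.
    rewrite E. apply Z.divide_sub_r; rewrite Z.mul_comm; apply Z.divide_mul_l; auto.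
Qed.

Lemma rr_nz j : (1 <= j < n)%nat -> rr j <> 0%Z.
Proof.
  intros Hj E. destruct (rI_zero KK NN HK0 HKN j Zgcd1 E) as [c Hc]. destruct (Z.le_gt_cases c 0); nia.
Qed.
Lemma ss_nz j : (1 <= j < n)%nat -> ss j <> 0%Z.
Proof.
  intros Hj E. destruct (sI_zero KK NN HK0 HKN j Zgcd1 E) as [c Hc]. destruct (Z.le_gt_cases c 0); nia.
Qed.
Lemma rr_n : rr n = 0%Z.
Proof. apply rI_NN; auto using HK0, HKN. Qed.
Lemma ss_n : ss n = 0%Z.
Proof. apply sI_NN; auto using HK0, HKN. Qed.

Definition alpha := 1 - g yp + yp.
Definition beta := g ym - ym.

Lemma P_off j : (1 <= j <= n)%nat -> exists o, iterF F j yp = IZR (rr j) * u + o /\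
  (alpha - (INR j - 1) * eps <= o <= alpha + (INR j - 1) * eps).
Proof.
  induction j as [|j IH]; intros Hj; [lia|].
  destruct (Nat.eq_dec j 0) as [->|Hj0].
  - exists alpha. split; [|simpl; lra].
    replace (rr 1) with (KK - NN)%Z by (cbn [rI]; unfold stepr; rewrite Z.ltb_irrefl; lia).
    unfold iterF; simpl. unfold Fmap, alpha. rewrite minus_IZR, <- !INR_IZR_INZ. field.
    apply Rgt_not_eq, Hn0.
  - destruct IH as [o [Ho1 Ho2]]; [lia|].
    assert (INR j <= INR n) by (apply le_INR; lia).
    pose proof HC3. pose proof Heps. pose proof Hsg.
    assert (INR j >= 1) by (apply Rle_ge; replace 1 with (INR 1) by reflexivity; apply le_INR; lia).
    assert (Hr : rr j <> 0%Z) by (apply rr_nz; lia).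
    destruct (step_off (rr j) o Hr) as [o' [E1 E2]].
    { unfold alpha in *. split; nra. }
    exists o'. split.
    + change (iterF F (S j) yp) with (F (iterF F j yp)). rewrite Ho1, E1. reflexivity.
    + rewrite S_INR. nra.
Qed.

Lemma Q_off j : (1 <= j <= n)%nat -> exists o, iterF F j ym = IZR (ss j) * u + o /\
  (- beta - (INR j - 1) * eps <= o <= - beta + (INR j - 1) * eps).
Proof.
  induction j as [|j IH]; intros Hj; [lia|].
  destruct (Nat.eq_dec j 0) as [->|Hj0].
  - exists (- beta). split; [|simpl; lra].
    replace (ss 1) with KK by (cbn [sI]; unfold steps; simpl; lia).
    unfold iterF; simpl. unfold Fmap, beta. rewrite <- !INR_IZR_INZ. field.
    apply Rgt_not_eq, Hn0.
  - destruct IH as [o [Ho1 Ho2]]; [lia|].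
    assert (INR j <= INR n) by (apply le_INR; lia).
    pose proof HC4. pose proof Heps. pose proof Hsg.
    assert (INR j >= 1) by (apply Rle_ge; replace 1 with (INR 1) by reflexivity; apply le_INR; lia).
    assert (Hr : ss j <> 0%Z) by (apply ss_nz; lia).
    destruct (step_off (ss j) o Hr) as [o' [E1 E2]].
    { unfold beta in *. split; nra. }
    exists o'. split.
    + change (iterF F (S j) ym) with (F (iterF F j ym)). rewrite Ho1, E1.
      cbn [sI]. rewrite steps_eq by auto. reflexivity.
    + rewrite S_INR. nra.
Qed.


Local Notation P j := (iterF F j yp).
Local Notation Q l := (iterF F l ym).

Lemma yp_small : yp < u/2.
Proof. pose proof HC3. pose proof Hn1. pose proof Heps. pose proof (Hg01 yp). nra. Qed.
Lemma ym_small : - (u/2) < ym.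
Proof. pose proof HC4. pose proof Hn1. pose proof Heps. pose proof (Hg01 ym). nra. Qed.

Lemma INR_j_n j : (j <= n)%nat -> INR j - 1 <= INR n - 1.
Proof. intros; assert (INR j <= INR n) by (apply le_INR; lia). lra. Qed.
Lemma INR_j_1 j : (1 <= j)%nat -> 0 <= INR j - 1.
Proof. intros; assert (INR 1 <= INR j) by (apply le_INR; lia). simpl in *. lra. Qed.

Lemma P_bnd j : (1 <= j <= n)%nat -> IZR (rr j) * u < P j < IZR (rr j) * u + u/2
  /\ yp < P j - IZR (rr j) * u.
Proof.
  intros Hj. destruct (P_off j Hj) as [o [E Ho]]. rewrite E.
  pose proof HC3. pose proof Heps. pose proof (INR_j_n j ltac:(lia)). pose proof (INR_j_1 j ltac:(lia)).
  pose proof Hsg. unfold alpha in *.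
  assert ((INR j - 1) * eps <= (INR n - 1) * eps) by nra.
  assert (0 <= (INR j - 1) * eps) by nra.
  split; [split|]; nra.
Qed.

Lemma Pn_gt : yp < P n.
Proof. destruct (P_bnd n ltac:(lia)) as [_ H]. rewrite rr_n in H. simpl in H. lra. Qed.

Lemma Q_bnd l : (1 <= l <= n)%nat -> IZR (ss l) * u - u/2 < Q l < IZR (ss l) * u
  /\ Q l - IZR (ss l) * u < ym.
Proof.
  intros Hj. destruct (Q_off l Hj) as [o [E Ho]]. rewrite E.
  pose proof HC4. pose proof Heps. pose proof (INR_j_n l ltac:(lia)). pose proof (INR_j_1 l ltac:(lia)).
  pose proof Hsg. unfold beta in *.
  assert ((INR l - 1) * eps <= (INR n - 1) * eps) by nra.
  assert (0 <= (INR l - 1) * eps) by nra.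
  split; [split|]; nra.
Qed.

Lemma Qn_lt : Q n < ym.
Proof. destruct (Q_bnd n ltac:(lia)) as [_ H]. rewrite ss_n in H. simpl in H. lra. Qed.

Definition valid j l := (1 <= j <= n)%nat /\ (1 <= l <= n)%nat /\ ss l = (rr j + 1)%Z.

Lemma side j l : valid j l -> yp < P j \/ Q l < ym.
Proof.
  intros [Hj [Hl E]]. pose proof Hu. pose proof yp_small. pose proof ym_small.
  destruct (P_bnd j Hj) as [[B1 B2] _]. destruct (Q_bnd l Hl) as [[C1 C2] _].
  rewrite E in C1, C2. rewrite plus_IZR in C1, C2.
  destruct (Z.le_gt_cases 1 (rr j)) as [h|h].
  - left. assert (1 <= IZR (rr j)) by (apply IZR_le; lia). nra.
  - destruct (Z.le_gt_cases (rr j) (-2)) as [h2|h2].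
    + right. assert (IZR (rr j) <= -2) by (apply IZR_le; lia). nra.
    + destruct (Z.eq_dec (rr j) 0) as [h0|h0].
      * left. assert (j = n). { destruct (Nat.eq_dec j n); auto. exfalso. apply (rr_nz j); auto; lia. }
        subst j. apply Pn_gt.
      * right. assert (ss l = 0%Z) by lia.
        assert (l = n). { destruct (Nat.eq_dec l n); auto. exfalso. apply (ss_nz l); auto; lia. }
        subst l. apply Qn_lt.
Qed.

Lemma interval_loc j l x : valid j l -> P j <= x <= Q l -> IZR (rr j) * u < x < IZR (rr j) * u + u.
Proof.
  intros [Hj [Hl E]] Hx.
  destruct (P_bnd j Hj) as [[B1 B2] _]. destruct (Q_bnd l Hl) as [[C1 C2] _].
  rewrite E, plus_IZR in C2. lra.
Qed.

Lemma open_lap j l x : valid j l -> P j <= x <= Q l -> x < ym \/ yp < x.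
Proof. intros V Hx. destruct (side j l V); [right|left]; lra. Qed.

Lemma rr_w j : (1 <= j <= n)%nat -> rr (wn n j) = stepr KK NN (rr j).
Proof.
  intros Hj. unfold wn. destruct (Nat.ltb_spec j n).
  - reflexivity.
  - assert (j = n) by lia. subst j. rewrite rr_n. reflexivity.
Qed.
Lemma ss_w j : (1 <= j <= n)%nat -> ss (wn n j) = steps KK NN (ss j).
Proof.
  intros Hj. unfold wn. destruct (Nat.ltb_spec j n).
  - reflexivity.
  - assert (j = n) by lia. subst j. rewrite ss_n. reflexivity.
Qed.

Lemma valid_step j l : valid j l -> valid (wn n j) (wn n l).
Proof.
  intros [Hj [Hl E]]. split; [apply wn_range; auto; lia|]. split; [apply wn_range; auto; lia|].
  rewrite rr_w, ss_w, E by auto. apply steps_stepr.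
Qed.

Lemma map_pair j l x : valid j l -> P j <= x <= Q l -> P (wn n j) <= F x <= Q (wn n l).
Proof.
  intros V Hx. pose proof Pn_gt. pose proof Qn_lt.
  assert (M : F (P j) <= F x <= F (Q l)).
  { destruct (side j l V).
    - split; apply F_le_R; lra.
    - split; apply F_le_L; lra. }
  destruct V as [Hj [Hl E]]. split.
  - unfold wn. destruct (Nat.ltb_spec j n).
    + exact (proj1 M).
    + assert (j = n) by lia. subst j.
      change (P 1) with (F yp). apply Rle_trans with (F (P n)); [|exact (proj1 M)].
      apply F_le_R; lra.
  - unfold wn. destruct (Nat.ltb_spec l n).
    + exact (proj2 M).
    + assert (l = n) by lia. subst l.
      change (Q 1) with (F ym). apply Rle_trans with (F (Q n)); [exact (proj2 M)|].
      apply F_le_L; lra.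
Qed.

Lemma pair_iter i : forall j l x, valid j l -> P j <= x <= Q l ->
  valid (Nat.iter i (wn n) j) (Nat.iter i (wn n) l) /\
  P (Nat.iter i (wn n) j) <= iterF F i x <= Q (Nat.iter i (wn n) l).
Proof.
  induction i as [|i IH]; intros j l x V Hx.
  - simpl. auto.
  - rewrite !Nat.iter_succ_r. unfold iterF. rewrite Nat.iter_succ_r.
    apply (IH (wn n j) (wn n l) (F x)).
    + apply valid_step; auto.
    + apply map_pair; auto.
Qed.

Lemma iter_mono i : forall j l x y, valid j l -> P j <= x -> x <= y -> y <= Q l ->
  iterF F i x <= iterF F i y.
Proof.
  induction i as [|i IH]; intros j l x y V H1 H2 H3.
  - simpl. auto.
  - unfold iterF. rewrite !Nat.iter_succ_r.
    assert (Fxy : F x <= F y).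
    { destruct (side j l V).
      - apply F_le_R; lra.
      - apply F_le_L; lra. }
    apply (IH (wn n j) (wn n l)).
    + apply valid_step; auto.
    + apply (map_pair j l x V). lra.
    + exact Fxy.
    + apply (map_pair j l y V). lra.
Qed.


Lemma iter_ex_der m : forall x, ex_derive (iterF F m) x.
Proof.
  induction m as [|m IH]; intros x.
  - unfold iterF. simpl. apply ex_derive_id.
  - assert (H := is_derive_comp F (iterF F m) x _ _ (F_der (iterF F m x)) (Derive_correct _ _ (IH x))).
    eexists. exact H.
Qed.

Lemma iter_der_S m x : Derive (iterF F (S m)) x = Derive (iterF F m) x * (1 - Derive g (iterF F m x)).
Proof.
  apply is_derive_unique.
  exact (is_derive_comp F (iterF F m) x _ _ (F_der (iterF F m x)) (Derive_correct _ _ (iter_ex_der m x))).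
Qed.

Lemma iter_der_0 x : Derive (iterF F 0) x = 1.
Proof. apply (Derive_id x). Qed.

Lemma der_bound m x : (forall i, (i < m)%nat -> iterF F i x < ym \/ yp < iterF F i x) ->
  0 < Derive (iterF F m) x <= 1 /\ ((1 <= m)%nat -> Derive (iterF F m) x < 1).
Proof.
  induction m as [|m IH]; intros H.
  - rewrite iter_der_0. split; [lra| intros; lia].
  - rewrite iter_der_S.
    destruct IH as [IH1 _]; [intros; apply H; lia|].
    assert (0 < Derive g (iterF F m x) < 1) by (apply Hdg, H; lia).
    split; [split|intros]; nra.
Qed.

Lemma iter_cont m x : continuity_pt (iterF F m) x.
Proof. apply continuity_pt_filterlim. apply (ex_derive_continuous (iterF F m) x). apply iter_ex_der. Qed.

Lemma G_der_pair j l x : valid j l -> P j <= x <= Q l ->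
  0 < Derive (iterF F n) x < 1.
Proof.
  intros V Hx. destruct (der_bound n x) as [[h1 _] h2].
  - intros i Hi. destruct (pair_iter i j l x V Hx) as [V' Hx']. eapply open_lap; eauto.
  - split; auto. apply h2; lia.
Qed.

Lemma phi_dec j l x y : valid j l -> P j <= x -> x < y -> y <= Q l ->
  iterF F n y - y < iterF F n x - x.
Proof.
  intros V H1 H2 H3.
  destruct (MVT_cor2 (fun t => iterF F n t - t) (fun t => Derive (iterF F n) t - 1) x y H2)
    as [c [Hc1 Hc2]].
  { intros c _. apply is_derive_Reals.
    auto_derive. apply iter_ex_der. change (Derive (fun x0 : R => iterF F n x0) c) with (Derive (iterF F n) c). lra. }
  assert (0 < Derive (iterF F n) c < 1) by (apply (G_der_pair j l); auto; lra).
  nra.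
Qed.


Lemma PleQ j l : valid j l -> P j < Q l.
Proof.
  intros [Hj [Hl E]]. destruct (P_bnd j Hj) as [[B1 B2] _]. destruct (Q_bnd l Hl) as [[C1 C2] _].
  rewrite E, plus_IZR in C1. lra.
Qed.

Lemma G_self j l x : valid j l -> P j <= x <= Q l -> P j <= iterF F n x <= Q l.
Proof.
  intros V Hx. destruct (pair_iter n j l x V Hx) as [_ H].
  destruct V as [Hj [Hl _]]. rewrite !iter_wn_n in H by auto. exact H.
Qed.

Lemma conv_pair j l q z : valid j l -> P j <= q <= Q l -> iterF F n q = q ->
  P j <= z <= Q l -> Un_cv (fun m => Nat.iter m (iterF F n) z) q.
Proof.
  intros V Hq Gq Hz. apply (conv_interval (iterF F n) (P j) (Q l) q); auto.
  - apply iter_cont.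
  - intros x Hx. apply (G_self j l); auto.
  - intros x y [h1 h2] h3. apply (iter_mono n j l); auto.
  - intros x y h1 h2 h3. apply (phi_dec j l); auto.
Qed.

Lemma iter_mul m x : iterF F (m * n) x = Nat.iter m (iterF F n) x.
Proof.
  induction m as [|m IH]; [reflexivity|].
  change (S m * n)%nat with (n + m * n)%nat. unfold iterF in *.
  rewrite Nat.iter_add, IH. reflexivity.
Qed.

Lemma basin_from j l q z : valid j l -> P j <= q <= Q l -> iterF F n q = q ->
  P j <= iterF F n z <= Q l -> is_lim_seq (fun m => iterF F (m * n) z) q.
Proof.
  intros V Hq Gq Hz. apply is_lim_seq_incr_1.
  apply is_lim_seq_ext with (fun m => Nat.iter m (iterF F n) (iterF F n z)).
  { intros m. rewrite iter_mul. rewrite Nat.iter_succ_r. reflexivity. }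
  apply is_lim_seq_Reals. apply (conv_pair j l); auto.
Qed.

Lemma wn_n : wn n n = 1%nat.
Proof. unfold wn. rewrite Nat.ltb_irrefl. reflexivity. Qed.

Lemma iter_wn_from_n j : (1 <= j <= n)%nat -> Nat.iter j (wn n) n = j.
Proof.
  intros Hj. destruct j as [|j]; [lia|]. rewrite Nat.iter_succ_r, wn_n.
  rewrite iter_wn_add by lia. lia.
Qed.

Lemma iter_wn_pred j : (1 <= j <= n)%nat -> Nat.iter (n - 1) (wn n) (wn n j) = j.
Proof.
  intros Hj. rewrite <- Nat.iter_succ_r. replace (S (n - 1)) with n by lia.
  apply iter_wn_n; auto.
Qed.

Lemma G_via_F z : iterF F n z = iterF F (n - 1) (F z).
Proof.
  unfold iterF. rewrite <- Nat.iter_succ_r. f_equal. lia.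
Qed.

Lemma main_sec : exists p : R,
    periodic_of_period F n p /\
    attracting F n p /\
    (forall j : nat, (j < n)%nat -> iterF F j p < ym \/ yp < iterF F j p) /\
    immediate_basin F n p ym /\
    immediate_basin F n p yp.
Proof.
  destruct (sI_one KK NN HK0 HKN n Zgcd1 eq_refl) as [l0 [Hl0 Es]].
  assert (V0 : valid n l0).
  { split; [lia|]. split; auto. rewrite rr_n, Es. reflexivity. }
  pose proof (PleQ n l0 V0) as HPQ.
  destruct (IVT_cor (fun x => iterF F n x - x) (P n) (Q l0)) as [p [Hp Hp0]].
  { intros x. apply continuity_pt_minus; [apply iter_cont| apply continuity_pt_id]. }
  { lra. }
  { pose proof (G_self n l0 (P n) V0 ltac:(lra)). pose proof (G_self n l0 (Q l0) V0 ltac:(lra)).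
    nra. }
  assert (Gp : iterF F n p = p) by lra.
  pose proof Pn_gt as HPn. pose proof Qn_lt as HQn.
  exists p. split; [|split; [|split; [|split]]].
  -
    split; [lia|]. split; auto.
    intros j Hj E.
    destruct (pair_iter j n l0 p V0 Hp) as [V1 H1].
    rewrite iter_wn_from_n in V1, H1 by lia.
    pose proof (interval_loc _ _ _ V1 H1) as L1.
    pose proof (interval_loc _ _ _ V0 Hp) as L0. rewrite rr_n in L0. simpl in L0.
    rewrite E in L1. pose proof Hu.
    assert (rr j <> 0%Z) by (apply rr_nz; lia).
    destruct (Z.le_gt_cases 1 (rr j)) as [h|h].
    + assert (1 <= IZR (rr j)) by (apply IZR_le; lia). nra.
    + assert (IZR (rr j) <= -1) by (apply IZR_le; lia). nra.
  -
    split; [apply iter_ex_der|].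
    pose proof (G_der_pair n l0 p V0 Hp). rewrite Rabs_pos_eq; lra.
  - intros j Hj. destruct (pair_iter j n l0 p V0 Hp) as [V1 H1]. eapply open_lap; eauto.
  -
    set (i0 := (n - l0)%nat).
    exists i0. split; [unfold i0; lia|].
    destruct (pair_iter i0 n l0 p V0 Hp) as [V1 H1].
    assert (Ei : Nat.iter i0 (wn n) l0 = n) by (unfold i0; rewrite iter_wn_add; lia).
    rewrite Ei in V1, H1. set (js := Nat.iter i0 (wn n) n) in *.
    set (p' := iterF F i0 p) in *.
    assert (Gp' : iterF F n p' = p').
    { unfold p', iterF. rewrite <- Nat.iter_add, Nat.add_comm, Nat.iter_add.
      change (Nat.iter n F p) with (iterF F n p). rewrite Gp. reflexivity. }
    intros z Hz.
    assert (Hz' : p' <= z <= ym).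
    { unfold Rmin, Rmax in Hz. destruct (Rle_dec ym p'); lra. }
    exists i0. split; [unfold i0; lia|]. fold p'.
    pose proof (proj1 V1) as Hjs.
    apply (basin_from js n p' z V1); [lra|auto|].
    assert (V2 : valid (wn n js) 1).
    { rewrite <- wn_n. apply valid_step; auto. }
    assert (Hfz : P (wn n js) <= F z <= Q 1).
    { destruct (map_pair js n p' V1 H1) as [a _]. split.
      - apply Rle_trans with (F p'); auto. apply F_le_L; lra.
      - change (Q 1) with (F ym). apply F_le_L; lra. }
    destruct (pair_iter (n - 1) (wn n js) 1 (F z) V2 Hfz) as [_ H3].
    rewrite iter_wn_pred in H3 by auto. rewrite iter_wn_add in H3 by lia.
    replace (1 + (n - 1))%nat with n in H3 by lia.
    rewrite (G_via_F z). exact H3.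
  -
    exists 0%nat. split; [lia|].
    intros z Hz.
    assert (Hz' : yp <= z <= p).
    { change (iterF F 0 p) with p in Hz. unfold Rmin, Rmax in Hz. destruct (Rle_dec yp p); lra. }
    exists 0%nat. split; [lia|]. change (iterF F 0 p) with p.
    apply (basin_from n l0 p z V0); auto.
    assert (V2 : valid 1 (wn n l0)).
    { rewrite <- wn_n. apply valid_step; auto. }
    assert (Hfz : P 1 <= F z <= Q (wn n l0)).
    { destruct (map_pair n l0 p V0 Hp) as [_ a]. split.
      - change (P 1) with (F yp). apply F_le_R; lra.
      - apply Rle_trans with (F p); auto. apply F_le_R; lra. }
    destruct (pair_iter (n - 1) 1 (wn n l0) (F z) V2 Hfz) as [_ H3].
    rewrite iter_wn_pred in H3 by auto. rewrite iter_wn_add in H3 by lia.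
    replace (1 + (n - 1))%nat with n in H3 by lia.
    rewrite (G_via_F z). exact H3.
Qed.

End Main.

Theorem lemma3p1 (k n : nat) (g : R -> R) (ym yp eps : R) :
  (0 < k)%nat -> (k < n)%nat -> Nat.gcd k n = 1%nat ->
  in_class_F n (INR k / INR n) g ym yp eps ->
  exists p : R,
    periodic_of_period (Fmap (INR k / INR n) g) n p /\
    attracting (Fmap (INR k / INR n) g) n p /\
    (forall j : nat, (j < n)%nat ->
       iterF (Fmap (INR k / INR n) g) j p < ym \/
       yp < iterF (Fmap (INR k / INR n) g) j p) /\
    immediate_basin (Fmap (INR k / INR n) g) n p ym /\
    immediate_basin (Fmap (INR k / INR n) g) n p yp.
Proof.
  intros Hk Hkn Hg HC. exact (main_sec k n g ym yp eps Hk Hkn Hg HC).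
Qed.
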